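(* Let $m\geq 2$ be an integer and let $\delta$ be a real number with $0\leq\delta<\frac{1}{2m}\left(\frac12-\frac{1}{2^m-1}\right)$. Then there exists a sequence of binary $[[N_i,k_i,d_i]]$ stabilizer codes with $N_i\to\infty$, $$\liminf_{i\to\infty}\frac{k_i}{N_i}\geq R_m^{(\mathrm{ALT})}(\delta):=1-\frac{10}{3}m\delta-\frac{2}{2^m-1},\qquad \liminf_{i\to\infty}\frac{d_i}{N_i}\geq\delta.$$
   Context: A binary $[[n,k,d]]$ stabilizer code is given by an $(n+k)$-dimensional subspace $C\subseteq\mathbf{F}_2^{2n}$ with $C^{\perp\mathrm s}\subseteq C$, where $\langle\vec x,\vec y\rangle_{\mathrm s}=\sum_{i=1}^n x_iy_{n+i}-\sum_{i=1}^n x_{n+i}y_i$ and $C^{\perp\mathrm s}$ is the orthogonal complement of $C$ with respect to this form; its minimum distance $d$ is $\min\{w(\vec x)\mid \vec x\in C\setminus C^{\perp\mathrm s}\}$ with $w(\vec x)=\#\{1\le i\le n\mid (x_i,x_{n+i})\neq(0,0)\}$. *)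

(* Defs.v *)
From HB Require Import structures.
From mathcomp Require Import all_boot all_order all_algebra.
From mathcomp Require Import reals.
Set Implicit Arguments. Unset Strict Implicit. Unset Printing Implicit Defensive.
Import Order.TTheory GRing.Theory Num.Theory.
Local Open Scope ring_scope.

(* Vectors of F_2^{2n} are row vectors 'rV['F_2]_(n + n);
   coordinate x_i (1 <= i <= n) is x (lshift n i), coordinate x_{n+i} is x (rshift n i). *)
Notation F2 := 'F_2.
Notation vec n := 'rV[F2]_(n + n).

Definition xc n (x : vec n) (i : 'I_n) : F2 := x 0 (lshift n i).
Definition zc n (x : vec n) (i : 'I_n) : F2 := x 0 (rshift n i).

Definition symp n (x y : vec n) : F2 :=
  \sum_(i < n) xc x i * zc y i - \sum_(i < n) zc x i * xc y i.

Definition in_sperp n (C : {vspace vec n}) (x : vec n) : Prop :=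
  forall y : vec n, y \in C -> symp x y = 0.

Definition sweight n (x : vec n) : nat :=
  #|[set i : 'I_n | (xc x i, zc x i) != (0, 0)]|.

Definition stabilizer_code n (k d : nat) (C : {vspace vec n}) : Prop :=
  [/\ \dim C = (n + k)%N,
      (forall x : vec n, in_sperp C x -> x \in C),
      (exists2 x : vec n, x \in C /\ ~ in_sperp C x & sweight x = d) &
      (forall x : vec n, x \in C -> ~ in_sperp C x -> (d <= sweight x)%N)].

(* Main.v *)
Require Import Defs.
From HB Require Import structures.
From mathcomp Require Import all_boot all_order all_algebra.
From mathcomp Require Import reals.
From mathcomp Require Import zify.
From mathcomp Require Import ring lra.
From Stdlib Require Import ClassicalEpsilon.
Module Part0.
Import Order.TTheory GRing.Theory Num.Theory.
Local Open Scope ring_scope.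
Set Implicit Arguments. Unset Strict Implicit.

Definition wt n (v : 'rV[F2]_n) : nat := #|[set i : 'I_n | v 0 i != 0]|.

Lemma low_count n e a : (0 < a)%N ->
  (#|[set v : 'rV[F2]_n | (wt v <= e)%N]| * a ^ (n - e) <= (a + 1) ^ n)%N.
Proof.
move=> a0.
pose phi := fun v : 'rV[F2]_n => [ffun i => v 0 i].
have phi_inj : injective phi.
  move=> v w /ffunP E; apply/rowP => i; have := E i; rewrite !ffunE.
  by [].

set S := [set v | _].
have -> : #|S| = #|phi @: S| by rewrite card_imset.
set Sf := [set f : {ffun 'I_n -> F2} | (#|[set i | f i != (0%R:F2)]| <= e)%N].
have sub : phi @: S \subset Sf.
  apply/subsetP => f /imsetP [v]; rewrite inE => hv ->.
  rewrite inE; move: hv; rewrite /wt.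
  suff -> : [set i | phi v i != 0] = [set i | v 0 i != 0] by [].
  by apply/setP => i; rewrite !inE ffunE.
apply: (@leq_trans (#|Sf| * a ^ (n - e))).
  by rewrite leq_mul2r (subset_leq_card sub) orbT.
have E : ((a + 1) ^ n = \sum_(f : {ffun 'I_n -> F2}) \prod_(i < n) (if f i == (0%R : F2) then a else 1))%N.
  rewrite [RHS](_ : _ = \prod_(i < n) \sum_(b : F2) (if b == (0%R:F2) then a else 1))%N; last first.
    by rewrite (bigA_distr_bigA (fun (i : 'I_n) (b : F2) => if b == (0%R:F2) then a else 1%N)).
  rewrite -[n in LHS]card_ord -prod_nat_const.
  apply: eq_bigr => i _.
  rewrite (bigD1 (0 : F2)) //= (bigD1 (1 : F2)) //= big1 ?addn0 //.
  move=> b /andP [b0 b1]; exfalso.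
  by move: b b0 b1; case=> [[|[|]]] //.
rewrite E (bigID (fun f => f \in Sf)) /= -[X in (X <= _)%N]addn0 leq_add //.
rewrite -sum_nat_const; apply: leq_sum => f fS.
have -> : (\prod_(i < n) (if f i == (0%R : F2) then a else 1) = a ^ #|[set i | f i == (0%R:F2)]|)%N.
  rewrite (bigID (fun i => f i == (0%R:F2))) /= [X in (_ * X)%N]big1 ?muln1; last by move=> i; case: ifP.
  rewrite (eq_bigr (fun _ => a)); last by move=> i ->.
  rewrite -prod_nat_const; apply: eq_bigl => i; by rewrite inE.
apply: leq_pexp2l => //; last first.
move: fS; rewrite inE => fS.
have C : (#|[set i | f i == (0%R:F2)]| + #|[set i | f i != (0%R:F2)]| = n)%N.
  rewrite -[X in _ = X]card_ord -(cardC [set i | f i == (0%R:F2)]); congr (_ + _)%N.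
  by apply: eq_card => i; rewrite !inE.
move: C fS; move: (#|[set i | f i == (0%R:F2)]|) (#|[set i | f i != (0%R:F2)]|) => x y; lia.
Qed.
Local Open Scope nat_scope.
Lemma bern b t : t <= b -> b ^ t * (b - t) <= (b - 1) ^ t * b.
Proof.
elim: t => [|t IH] ht; first by rewrite !expn0 subn0.
have := IH (ltnW ht) => {}IH.
rewrite !expnS.
apply: (@leq_trans ((b - 1) * (b ^ t * (b - t)))).
  have -> : b * b ^ t * (b - t.+1) = b ^ t * (b * (b - t.+1)) by rewrite mulnCA mulnA.
  rewrite [X in _ <= X]mulnC -mulnA leq_mul2l; apply/orP; right.
  nia.
rewrite -mulnA leq_mul2l IH orbT //.
Qed.

Lemma pow_ratio m t : (2 ^ m.+1) ^ t <= (2 ^ m.+1 - 1) ^ t * 2 ^ (t %/ 2 ^ m + 1).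
Proof.
set r := 2 ^ m; set b := 2 ^ m.+1.
have hb : b = r * 2 by rewrite /b expnS mulnC.
have r0 : 0 < r by rewrite expn_gt0.
have small : forall u, u <= r -> b ^ u <= 2 * (b - 1) ^ u.
  move=> u hu.
  have := bern (t:=u) (b:=b) ltac:(lia).
  have : r <= b - u by lia.
  move: (b ^ u) ((b - 1) ^ u) => X Y h1 h2.
  have h3 : X * r <= X * (b - u) by rewrite leq_mul2l h1 orbT.
  have := leq_trans h3 h2; rewrite hb; nia.
rewrite -/b {1 2}(divn_eq t r) !expnD.
set q := t %/ r; set rm := t %% r.
have hr := small r (leqnn r).
have hrm := small rm (ltnW (ltn_pmod t r0)).
rewrite !(mulnC q r) !expnM expn1.
apply: (@leq_trans (((2 * (b-1)^r) ^ q) * (2 * (b - 1) ^ rm))).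
  apply: leq_mul => //; case: q => [|q]; by rewrite ?expn0 ?leq_exp2r ?hr.
rewrite expnMn; nia.
Qed.

Local Open Scope ring_scope.
Lemma vol_bound m n e :
  (#|[set v : 'rV[F2]_n | (wt v <= e)%N]| <= 2 ^ (m.+1 * e + n %/ 2 ^ m + 1))%N.
Proof.
set V := #|_|.
have a0 : (0 < 2 ^ m.+1 - 1)%N by rewrite subn_gt0 (@leq_trans 2) // -{1}(expn1 2) leq_pexp2l.
have h1 := low_count n e a0.
have hb : (2 ^ m.+1 - 1 + 1 = 2 ^ m.+1)%N by rewrite subnK // expn_gt0.
rewrite hb in h1.
have h2 : ((2 ^ m.+1) ^ n <= (2 ^ m.+1) ^ e * (2 ^ m.+1) ^ (n - e))%N.
  by rewrite -expnD leq_pexp2l ?expn_gt0 //; lia.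
have h3 := pow_ratio m (n - e).
have h4 : ((n - e) %/ 2 ^ m + 1 <= n %/ 2 ^ m + 1)%N by rewrite leq_add2r leq_div2r // leq_subr.
have h5 : (2 ^ ((n - e) %/ 2 ^ m + 1) <= 2 ^ (n %/ 2 ^ m + 1))%N by rewrite leq_pexp2l.
rewrite -(@leq_pmul2r ((2 ^ m.+1 - 1) ^ (n - e))) ?expn_gt0 ?a0 //.
apply: (leq_trans h1); apply: (leq_trans h2).
have hbe : ((2 ^ m.+1) ^ e = 2 ^ (m.+1 * e))%N by rewrite expnM.
rewrite hbe -addnA expnD -mulnA leq_mul2l; apply/orP; right.
rewrite mulnC; apply: (leq_trans h3); by rewrite leq_mul2l h5 orbT.
Qed.
Lemma fiber_count (T W : finZmodType) (phi : T -> W) (S : {set W}) :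
  (forall x y, phi (x + y) = phi x + phi y) ->
  (forall w, exists x, phi x = w) ->
  (#|[set x | phi x \in S]| * #|W| = #|S| * #|T|)%N.
Proof.
move=> add surj.
have phi0 : phi 0 = 0.
  have h := add 0 0; rewrite addr0 in h.
  by apply: (@addrI _ (phi 0)); rewrite addr0 -h.
have Fc : forall w, #|[set x | phi x == w]| = #|[set x | phi x == 0]|.
  move=> w; have [x0 hx0] := surj w.
  rewrite -[RHS](card_imset _ (addIr x0)).
  apply: eq_card => x; rewrite inE; apply/idP/imsetP.
    move/eqP=> hx; exists (x - x0); rewrite ?inE ?subrK //.
    by apply/eqP; apply: (@addIr _ (phi x0)); rewrite -add subrK add0r hx hx0.
  by case=> y; rewrite inE => /eqP hy ->; rewrite add hy hx0 add0r.
have part : forall A : {set W}, #|[set x | phi x \in A]| = (#|A| * #|[set x | phi x == 0%R]|)%N.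
  move=> A.
  rewrite -sum1_card (partition_big phi (mem A)) /=; last by move=> x; rewrite inE.
  rewrite -sum_nat_const; apply: eq_bigr => w wA.
  rewrite -(Fc w) -sum1_card; apply: eq_bigl => x; rewrite !inE.
  by apply/idP/idP => [/andP[_ ->]//|/eqP hx]; rewrite hx wA eqxx.
have T_eq : #|T| = (#|W| * #|[set x | phi x == 0%R]|)%N.
  rewrite -(cardsT W) -(part setT); apply: eq_card => x; by rewrite !inE.
by rewrite part T_eq mulnAC mulnA.
Qed.
Lemma union_bound (I T : finType) (P : I -> pred T) (A : {set T}) :
  (forall x, x \in A -> exists i, P i x) ->
  (#|A| <= \sum_i #|[set x | P i x]|)%N.
Proof.
move=> cov.
have E : forall i, #|[set x | P i x]| = \sum_x (P i x : nat).
  move=> i; rewrite -sum1_card big_mkcond /=; apply: eq_bigr => x _.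
  by rewrite inE; case: (P i x).
under eq_bigr do rewrite E.
rewrite exchange_big /= -sum1_card big_mkcond /=.
apply: leq_sum => x _; case: ifP => // /cov [i Pi].
by rewrite (bigD1 i) //= Pi.
Qed.

End Part0.
Import Part0.

Module Part1.
Import GRing.Theory.
Set Implicit Arguments. Unset Strict Implicit.
Local Open Scope ring_scope.

Lemma sum_mulr_nat (I : finType) (f : I -> nat) c : ((\sum_i f i) * c = \sum_i (f i * c))%N.
Proof. by elim/big_rec2: _ => // i a b _ <-; rewrite mulnDl. Qed.

Lemma card_rV c : #|{: 'rV[F2]_c}| = (2 ^ c)%N.
Proof. by rewrite card_mx card_Fp // mul1n. Qed.

Lemma nz_entry n (u : 'rV[F2]_n) : u != 0 -> exists j, u 0 j != 0.
Proof.
move=> u0; case: (pickP (fun j => u 0 j != 0)) => [j hj|h]; first by exists j.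
case/eqP: u0; apply/rowP => j; rewrite mxE; apply/eqP.
by have := h j => /negbFE.
Qed.

Lemma surjA c n (u : 'rV[F2]_c) : u != 0 ->
  forall w : 'rV[F2]_n, exists G : 'M_(c, n), u *m G = w.
Proof.
move=> /nz_entry [j hj] w.
exists (\matrix_(i, l) if i == j then (u 0 j)^-1 * w 0 l else 0).
apply/rowP => l; rewrite !mxE (bigD1 j) //= big1 ?addr0.
  by rewrite mxE eqxx mulrA mulfV // mul1r.
by move=> i /negbTE hi; rewrite mxE hi mulr0.
Qed.

Lemma surjB s k n (z : 'rV[F2]_n) : z != 0 ->
  forall w : 'rV[F2]_s, exists G : 'M_(s + k, n), z *m (usubmx G)^T = w.
Proof.
move=> /nz_entry [l hl] w.
exists (col_mx (\matrix_(i, t) if t == l then (z 0 l)^-1 * w 0 i else 0) 0).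
rewrite col_mxKu.
apply/rowP => i; rewrite !mxE (bigD1 l) //= big1 ?addr0.
  by rewrite !mxE eqxx mulrA mulfV // mul1r.
by move=> t /negbTE ht; rewrite !mxE ht mulr0.
Qed.

Lemma exists_good s k n e : n = (s + k + s)%N ->
  (2 * #|[set v : 'rV[F2]_n | (wt v <= e)%N]| < 2 ^ s)%N ->
  exists G : 'M[F2]_(s + k, n),
    (forall u : 'rV_(s + k), u != 0 -> (e < wt (u *m G))%N) /\
    (forall z : 'rV_n, z != 0 -> z *m (usubmx G)^T = 0 -> (e < wt z)%N).
Proof.
move=> hn hL.
set Low := [set v : 'rV[F2]_n | (wt v <= e)%N].
set L := #|Low|.
set T := #|{: 'M[F2]_(s + k, n)}|.
pose BA := [set G : 'M[F2]_(s + k, n) | [exists u : 'rV_(s + k), (u != 0) && (u *m G \in Low)]].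
pose BB := [set G : 'M[F2]_(s + k, n) | [exists z : 'rV_n, [&& z != 0, z \in Low & z *m (usubmx G)^T == 0]]].
have hA : (#|BA| * 2 ^ n <= 2 ^ (s + k) * L * T)%N.
  have := @union_bound _ _ (fun (u : 'rV[F2]_(s + k)) (G : 'M[F2]_(s + k, n)) => (u != 0) && (u *m G \in Low)) BA.
  move=> /(_ _) ub.
  have {}ub := ub (fun G => ltac:(by rewrite inE => /existsP)).
  apply: (leq_trans (leq_mul ub (leqnn _))).
  have eqs : (2 ^ (s + k) * L * T = \sum_(u : 'rV[F2]_(s + k)) (L * T))%N.
    by rewrite sum_nat_const cardT -cardE card_rV mulnA.
  rewrite eqs sum_mulr_nat; apply: leq_sum => u _.
  case: (eqVneq u 0) => [->|u0].
    by rewrite (@eq_card _ _ (set0 : {set 'M[F2]_(s + k, n)})) ?cards0 // => G; rewrite !inE eqxx.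
  rewrite (@eq_card _ _ [set G : 'M[F2]_(s + k, n) | u *m G \in Low]); last by move=> G; rewrite !inE ?u0.
  rewrite -card_rV (fiber_count (phi := fun G : 'M[F2]_(s + k, n) => u *m G)) //.
    by move=> x y; rewrite mulmxDr.
  exact: surjA.
have hB : (#|BB| * 2 ^ s <= L * T)%N.
  have := @union_bound _ _ (fun (z : 'rV[F2]_n) (G : 'M[F2]_(s + k, n)) => [&& z != 0, z \in Low & z *m (usubmx G)^T == 0]) BB.
  move=> /(_ _) ub.
  have {}ub := ub (fun G => ltac:(by rewrite inE => /existsP)).
  apply: (leq_trans (leq_mul ub (leqnn _))).
  rewrite sum_mulr_nat /L -sum_nat_const.
  rewrite [X in (_ <= X)%N]big_mkcond /=.
  apply: leq_sum => z _; case: ifP => zL; last first.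
    by rewrite (@eq_card _ _ (set0 : {set 'M[F2]_(s + k, n)})) ?cards0 // => G; rewrite !inE ?zL ?andbF.
  case: (eqVneq z 0) => [->|z0].
    by rewrite (@eq_card _ _ (set0 : {set 'M[F2]_(s + k, n)})) ?cards0 // => G; rewrite !inE eqxx.
  rewrite (@eq_card _ _ [set G : 'M[F2]_(s + k, n) | z *m (usubmx G)^T \in [set 0 : 'rV[F2]_s]]); last first.
    by move=> G; move: zL; rewrite !inE.
  rewrite -card_rV (fiber_count (phi := fun G : 'M[F2]_(s + k, n) => z *m (usubmx G)^T)) ?cards1 ?mul1n //.
    by move=> x y; rewrite linearD /= linearD /= mulmxDr.
  exact: surjB.
have hA' : (#|BA| * 2 ^ s <= L * T)%N.
  rewrite -(@leq_pmul2l (2 ^ (s + k))) ?expn_gt0 //.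
  by rewrite mulnCA -expnD -hn mulnA.
have T0 : (0 < T)%N by rewrite /T card_mx card_Fp // expn_gt0.
have lt : (#|BA :|: BB| < T)%N.
  apply: (leq_ltn_trans (leq_card_setU BA BB)).
  rewrite -(@ltn_pmul2r (2 ^ s)) ?expn_gt0 // mulnDl.
  apply: (leq_ltn_trans (leq_add hA' hB)).
  by rewrite addnn -mul2n mulnA [(T * _)%N]mulnC ltn_pmul2r.
have [G GB] : exists G, G \notin BA :|: BB.
  apply/existsP; rewrite -negb_forall; apply/negP => /forallP all.
  suff : #|BA :|: BB| = T by move=> E; rewrite E ltnn in lt.
  rewrite /T -cardsT; apply: eq_card => G; rewrite in_setT; exact: all.
move: GB; rewrite in_setU negb_or => /andP [GA GBB].
exists G; split.
  move=> u u0; rewrite ltnNge; apply/negP => hu.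
  move: GA; rewrite inE => /existsP; apply; exists u; by rewrite u0 inE hu.
move=> z z0 zH; rewrite ltnNge; apply/negP => hz.
move: GBB; rewrite inE => /existsP; apply; exists z; by rewrite z0 inE hz zH eqxx.
Qed.

End Part1.
Import Part1.

Module Part2.
Import GRing.Theory.
Set Implicit Arguments. Unset Strict Implicit.
Local Open Scope ring_scope.

Definition fA s k n (G : 'M[F2]_(s + k, n)) : 'Hom('rV[F2]_(s + k), vec n) :=
  linfun (mulmxr (row_mx G (0 : 'M_(s + k, n)))).
Definition fB s k n (G : 'M[F2]_(s + k, n)) : 'Hom(vec n, 'rV[F2]_(n + s)) :=
  linfun (mulmxr (block_mx (1%:M : 'M_n) (0 : 'M_(n, s)) (0 : 'M_(n, n)) (usubmx G)^T)).
Definition CC s k n (G : 'M[F2]_(s + k, n)) : {vspace vec n} :=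
  (limg (fA G) + lker (fB G))%VS.

Lemma fAE s k n (G : 'M[F2]_(s + k, n)) u : fA G u = row_mx (u *m G) 0.
Proof. by rewrite /fA lfunE /= mul_mx_row mulmx0. Qed.

Lemma fBE s k n (G : 'M[F2]_(s + k, n)) y :
  fB G y = row_mx (lsubmx y) (rsubmx y *m (usubmx G)^T).
Proof.
rewrite /fB lfunE /= -{1}(hsubmxK y) mul_row_block.
by rewrite !mulmx0 mulmx1 addr0 add0r.
Qed.

Lemma memCC s k n (G : 'M[F2]_(s + k, n)) y :
  y \in CC G <-> (exists u, lsubmx y = u *m G) /\ rsubmx y *m (usubmx G)^T = 0.
Proof.
split.
  move/memv_addP => [a /memv_imgP [u _ ->] [b]]; rewrite memv_ker fBE => /eqP hb ->.
  have [hb1 hb2] := eq_row_mx (etrans hb (esym (row_mx0 _ _ _ _))).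
  rewrite fAE linearD /= linearD /= row_mxKl row_mxKr hb1 addr0 add0r; split => //.
  by exists u.
move=> [[u hu] hz]; apply/memv_addP.
exists (fA G u); first exact: memv_img (memvf _).
exists (row_mx 0 (rsubmx y)).
  by rewrite memv_ker fBE row_mxKl row_mxKr hz row_mx0.
by rewrite fAE add_row_mx addr0 add0r -hu hsubmxK.
Qed.

Lemma symp_rowmx n (x : vec n) (a b : 'rV[F2]_n) :
  symp x (row_mx a b) = \sum_i lsubmx x 0 i * b 0 i - \sum_i rsubmx x 0 i * a 0 i.
Proof.
rewrite /symp /xc /zc; congr (_ - _); apply: eq_bigr => i _;
  by rewrite ?row_mxEl ?row_mxEr !mxE.
Qed.

Lemma wt0 n : wt (0 : 'rV[F2]_n) = 0%N.
Proof. by rewrite /wt (@eq_card _ _ (set0 : {set 'I_n})) ?cards0 // => i; rewrite !inE mxE eqxx. Qed.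

Lemma perpR s k n (G : 'M[F2]_(s + k, n)) x :
  in_sperp (CC G) x -> rsubmx x *m (usubmx G)^T = 0.
Proof.
move=> hx; apply/rowP => j; rewrite !mxE.
set u : 'rV[F2]_(s + k) := 'e_(lshift k j).
have yC : row_mx (u *m G) 0 \in CC G.
  by apply/memCC; rewrite row_mxKl row_mxKr mul0mx; split => //; exists u.
have := hx _ yC; rewrite symp_rowmx big1 ?sub0r; last by move=> i _; rewrite [X in _ * X]mxE mulr0.
move/eqP; rewrite oppr_eq0 => /eqP h; rewrite -[RHS]h; apply: eq_bigr => i _.
by rewrite -rowE -row_usubmx !mxE.
Qed.

Lemma perpL s k n (G : 'M[F2]_(s + k, n)) x :
  in_sperp (CC G) x -> exists w, lsubmx x = w *m usubmx G.
Proof.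
move=> hx; set H := usubmx G; set a := lsubmx x.
set K := kermx H^T.
have orth : forall z : 'rV[F2]_n, z *m H^T = 0 -> z *m a^T = 0.
  move=> z hz.
  have yC : row_mx 0 z \in CC G.
    by apply/memCC; rewrite row_mxKl row_mxKr hz; split => //; exists 0; rewrite mul0mx.
  have := hx _ yC; rewrite symp_rowmx [X in _ - X]big1 ?subr0; last by move=> i _; rewrite [X in _ * X]mxE mulr0.
  move=> h; apply/rowP => j; rewrite !mxE (ord1 j) -[RHS]h; apply: eq_bigr => i _.
  by rewrite !mxE mulrC.
have Ka : K *m a^T = 0.
  apply/row_matrixP => i; rewrite row_mul row0; apply: orth.
  by rewrite -row_mul mulmx_ker row0.
have aW : (a <= kermx K^T)%MS by apply/sub_kermxP; rewrite -[a]trmxK -trmx_mul Ka trmx0.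
have HW : (H <= kermx K^T)%MS by apply/sub_kermxP; rewrite -[H]trmxK -trmx_mul mulmx_ker trmx0.
have rk : \rank (kermx K^T) = \rank H.
  rewrite mxrank_ker mxrank_tr mxrank_ker mxrank_tr subKn //.
  by rewrite -mxrank_tr rank_leq_row.
have WH : (kermx K^T <= H)%MS.
  by rewrite -(mxrank_leqif_sup HW).2 rk eqxx.
have aH : (a <= H)%MS := submx_trans aW WH.
by exists (a *m pinvmx H); rewrite mulmxKpV.
Qed.

Definition sperpb n (C : {vspace vec n}) (x : vec n) : bool :=
  [forall y : vec n, (y \in C) ==> (symp x y == 0)].

Lemma sperpP n (C : {vspace vec n}) x : reflect (in_sperp C x) (sperpb C x).
Proof.
apply: (iffP forallP) => h y.
  by move=> yC; have := h y; rewrite yC => /eqP.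
by apply/implyP => yC; apply/eqP; apply: h.
Qed.

Lemma wt_le_sweight_l n (y : vec n) : (wt (lsubmx y) <= sweight y)%N.
Proof.
apply: subset_leq_card; apply/subsetP => i; rewrite !inE mxE /xc.
by apply: contra => /eqP [-> _].
Qed.

Lemma wt_le_sweight_r n (y : vec n) : (wt (rsubmx y) <= sweight y)%N.
Proof.
apply: subset_leq_card; apply/subsetP => i; rewrite !inE mxE /zc.
by apply: contra => /eqP [_ ->].
Qed.

Lemma dimCC s k n (G : 'M[F2]_(s + k, n)) : n = (s + k + s)%N ->
  (forall u : 'rV_(s + k), u *m G = 0 -> u = 0) ->
  \dim (CC G) = (n + k)%N.
Proof.
move=> hn injG.
set H := usubmx G.
have disj : (limg (fA G) :&: lker (fB G) = 0)%VS.
  apply/eqP; rewrite -subv0; apply/subvP => y; rewrite memv_cap memv0.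
  case/andP => /memv_imgP [u _ ->]; rewrite memv_ker fBE fAE row_mxKl.
  move=> /eqP /(fun h => etrans h (esym (row_mx0 _ _ _ _))) /eq_row_mx [h _].
  by rewrite h row_mx0.
have dA : \dim (limg (fA G)) = (s + k)%N.
  rewrite limg_dim_eq ?dimvf ?dim_matrix ?mul1r //.
  rewrite capfv; apply/eqP/lker0P => u w; rewrite !fAE => /eq_row_mx [h _].
  by apply/eqP; rewrite -subr_eq0; apply/eqP/injG; rewrite mulmxBl h subrr.
have Hfree : row_free H.
  apply: inj_row_free => w hw; have : row_mx w 0 *m G = 0.
    by rewrite -{1}(vsubmxK G) mul_row_col mul0mx addr0.
  by move/injG => h; case: (eq_row_mx (etrans h (esym (row_mx0 _ _ _ _)))).
have surj : (limg (fB G) = fullv)%VS.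
  apply/eqP; rewrite eqEsubv subvf /=; apply/subvP => w _; apply/memv_imgP.
  have cH : (rsubmx w <= H^T)%MS.
    apply: submx_full; rewrite /row_full mxrank_tr; exact: Hfree.
  exists (row_mx (lsubmx w) (rsubmx w *m pinvmx H^T)); first exact: memvf.
  by rewrite fBE row_mxKl row_mxKr mulmxKpV // hsubmxK.
have dB : \dim (lker (fB G)) = (n - s)%N.
  have := limg_ker_dim (fB G) fullv; rewrite capfv surj !dimvf !dim_matrix !mul1r.
  move: (\dim (lker (fB G))) => a h; lia.
rewrite /CC dimv_disjoint_sum // dA dB; lia.
Qed.

Lemma code_from_G s k n e (G : 'M[F2]_(s + k, n)) : n = (s + k + s)%N -> (0 < k)%N ->
  (forall u : 'rV_(s + k), u != 0 -> (e < wt (u *m G))%N) ->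
  (forall z : 'rV_n, z != 0 -> z *m (usubmx G)^T = 0 -> (e < wt z)%N) ->
  exists d, stabilizer_code k d (CC G) /\ (e < d)%N.
Proof.
move=> hn k0 gA gB.
set H := usubmx G.
have injG : forall u : 'rV_(s + k), u *m G = 0 -> u = 0.
  move=> u hu; apply/eqP; apply: contraT => u0.
  by have := gA u u0; rewrite hu wt0.
have dist : forall y, y \in CC G -> y != 0 -> (e < sweight y)%N.
  move=> y /memCC [[u hu] hz] y0.
  case: (eqVneq (lsubmx y) 0) => [l0|l0].
    have r0 : rsubmx y != 0.
      apply: contra y0 => /eqP r0; by rewrite -(hsubmxK y) l0 r0 row_mx0.
    exact: leq_trans (gB _ r0 hz) (wt_le_sweight_r y).
  have u0 : u != 0 by apply: contra l0 => /eqP u0; rewrite hu u0 mul0mx.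
  by apply: leq_trans (wt_le_sweight_l y); rewrite hu; apply: gA.
have perpC : forall x, in_sperp (CC G) x -> x \in CC G.
  move=> x hx; apply/memCC; split; last exact: perpR.
  have [w hw] := perpL hx.
  exists (row_mx w 0); rewrite hw -{2}(vsubmxK G) mul_row_col mul0mx addr0 //.
pose v : 'rV[F2]_k := const_mx 1.
have v0 : v != 0.
  apply/eqP => /rowP /(_ (Ordinal k0)); rewrite !mxE => /eqP; by rewrite oner_eq0.
pose x0 := row_mx ((row_mx (0 : 'rV_s) v) *m G) (0 : 'rV_n).
have x0C : x0 \in CC G.
  by apply/memCC; rewrite row_mxKl row_mxKr mul0mx; split => //; eexists.
have x0P : ~ in_sperp (CC G) x0.
  move=> /perpL [w]; rewrite row_mxKl => hw.
  have : (row_mx 0 v - row_mx w 0) *m G = 0.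
    by rewrite mulmxBl hw -{2}(vsubmxK G) mul_row_col mul0mx addr0 subrr.
  move/injG/eqP; rewrite subr_eq0 => /eqP /eq_row_mx [_ hv].
  by move: v0; rewrite hv eqxx.
have exP : exists d, [exists x : vec n, [&& x \in CC G, ~~ sperpb (CC G) x & sweight x == d]].
  exists (sweight x0); apply/existsP; exists x0; rewrite x0C eqxx andbT /=.
  by apply/negP => /sperpP.
case: (ex_minnP exP) => d /existsP [x /and3P [xC xP /eqP xd]] dmin.
exists d; split; last first.
  rewrite -xd; apply: dist xC _; apply: contra xP => /eqP ->.
  by apply/sperpP => y _; rewrite /symp /xc /zc !big1 ?subr0 // => i _; rewrite mxE mul0r.
split.
- apply: dimCC => //.
- exact: perpC.
- exists x => //; split => //; by move/sperpP; apply/negP.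
- move=> y yC yP; apply: dmin; apply/existsP; exists y; rewrite yC eqxx andbT /=.
  by apply/negP => /sperpP.
Qed.

End Part2.
Import Part2.

Module Part3.
Import GRing.Theory.
Set Implicit Arguments. Unset Strict Implicit.

Lemma code_param m n e : (2 * (m.+1 * e + n %/ 2 ^ m + 3) < n)%N ->
  exists (C : {vspace vec n}) d,
    stabilizer_code (n - 2 * (m.+1 * e + n %/ 2 ^ m + 3)) d C /\ (e < d)%N.
Proof.
set s := (m.+1 * e + n %/ 2 ^ m + 3)%N => hs.
set k := (n - 2 * s)%N.
have hn : n = (s + k + s)%N by rewrite /k; lia.
have k0 : (0 < k)%N by rewrite /k; lia.
have hL : (2 * #|[set v : 'rV[F2]_n | (wt v <= e)%N]| < 2 ^ s)%N.
  have hv := vol_bound m n e.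
  apply: (@leq_ltn_trans (2 * 2 ^ (m.+1 * e + n %/ 2 ^ m + 1))).
    by rewrite leq_mul2l hv orbT.
  rewrite -expnS /s ltn_exp2l //; lia.
have [G [gA gB]] := exists_good hn hL.
have [d [hd ed]] := code_from_G hn k0 gA gB.
by exists (CC G), d.
Qed.

End Part3.
Import Part3.

Module Part4.
Import Order.TTheory GRing.Theory Num.Theory.
Local Open Scope ring_scope.

Lemma real_bounds (R : realType) (m : nat) (delta : R) :
  (2 <= m)%N -> 0 <= delta ->
  delta < (2 * m%:R)^-1 * (2^-1 - (2 ^+ m - 1)^-1) ->
  0 < 1 - 10 / 3 * m%:R * delta - 2 / (2 ^+ m - 1) /\
  forall n : nat,
    2 * ((m.+1 * Num.truncn (delta * n%:R) + n %/ 2 ^ m + 3)%N%:R) <=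
    n%:R * (1 - (1 - 10 / 3 * m%:R * delta - 2 / (2 ^+ m - 1))) + 6.
Proof.
move=> hm hd0 hdb.
have X4 : 4 <= (2 ^+ m : R).
  rewrite -natrX -[4]/(4%:R) ler_nat.
  by rewrite (@leq_trans (2 ^ 2)) // leq_pexp2l.
set X := (2 ^+ m : R) in X4 hdb *.
set t := (X - 1)^-1 in hdb *.
have ht : (X - 1) * t = 1 by rewrite mulfV //; apply/eqP => h; lra.
have t0 : 0 < t by rewrite invr_gt0; lra.
have t3 : 3 * t <= 1 by nra.
have hX : X * X^-1 = 1 by rewrite mulfV //; apply/eqP => h; lra.
have Xi0 : 0 < X^-1 by rewrite invr_gt0; lra.
have Xt : X^-1 <= t by nra.
have M2 : 2 <= (m%:R : R) by rewrite -[2]/(2%:R) ler_nat.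
set M := (m%:R : R) in M2 hdb *.
have hM : (2 * M) * (2 * M)^-1 = 1 by rewrite mulfV //; apply/eqP => h; lra.
have hP : 2 * (M * delta) < 2^-1 - t.
  have : 0 < (2 * M) * ((2 * M)^-1 * (2^-1 - t) - delta).
    by apply: mulr_gt0; lra.
  rewrite mulrBr [X in 0 < X - _]mulrA hM mul1r -mulrA; lra.
have e1 : 10 / 3 * M * delta = 10 / 3 * (M * delta) by rewrite mulrA.
have e2 : 2 / (X - 1) = 2 * t by [].
rewrite e1.
split; first lra.
move=> n.
set e := Num.truncn (delta * n%:R).
have he : e%:R <= delta * n%:R by rewrite truncn_le; apply: mulr_ge0 => //; exact: ler0n.
have hq : ((n %/ 2 ^ m)%N%:R : R) <= n%:R * X^-1.
  rewrite -[_ * X^-1]/(n%:R / X) ler_pdivlMr; last lra.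
  by rewrite /X -natrX -natrM ler_nat leq_divM.
rewrite !natrD natrM.
have n0 : 0 <= (n%:R : R) by exact: ler0n.
have hMe : (m.+1%:R : R) * e%:R <= (M + 1) * (delta * n%:R).
  rewrite -addn1 natrD -/M; apply: ler_pM => //; try lra; exact: ler0n.
have hA : 0 <= delta * n%:R by apply: mulr_ge0.
have hMA : 2 * (M + 1) * (delta * n%:R) <= 10 / 3 * (M * (delta * n%:R)) by nra.
have hB : n%:R * X^-1 <= n%:R * t by apply: ler_wpM2l.
have eq : n%:R * (1 - (1 - 10 / 3 * (M * delta) - 2 * t)) =
          10 / 3 * (M * (delta * n%:R)) + 2 * (n%:R * t) by ring.
rewrite eq.
rewrite (_ : (3%N%:R : R) = 3) //.
lra.
Qed.

End Part4.
Import Part4.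

Import Order.TTheory GRing.Theory Num.Theory.
Local Open Scope ring_scope.

Theorem mainTheorem5 (R : realType) (m : nat) (delta : R) :
  (2 <= m)%N ->
  0 <= delta ->
  delta < (2 * m%:R)^-1 * (2^-1 - (2 ^+ m - 1)^-1) ->
  exists (N k d : nat -> nat) (C : forall i, {vspace vec (N i)}),
    (forall i, stabilizer_code (k i) (d i) (C i)) /\
    (forall M : nat, exists i0 : nat, forall i, (i0 <= i)%N -> (M <= N i)%N) /\
    (forall eps : R, 0 < eps -> exists i0 : nat, forall i, (i0 <= i)%N ->
       1 - 10 / 3 * m%:R * delta - 2 / (2 ^+ m - 1) - eps <= (k i)%:R / (N i)%:R) /\
    (forall eps : R, 0 < eps -> exists i0 : nat, forall i, (i0 <= i)%N ->
       delta - eps <= (d i)%:R / (N i)%:R).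
Proof.
move=> hm hd0 hdb.
have [Rpos sb] := @real_bounds R m delta hm hd0 hdb.
set Rr := 1 - 10 / 3 * m%:R * delta - 2 / (2 ^+ m - 1) in Rpos sb *.
pose M0 := (Num.truncn (7 / Rr)).+1.
pose N := fun i : nat => (i + M0)%N.
pose e := fun n : nat => Num.truncn (delta * n%:R).
pose s := fun n : nat => (m.+1 * e n + n %/ 2 ^ m + 3)%N.
pose k := fun i : nat => (N i - 2 * s (N i))%N.
have NR : forall i, 7 < (N i)%:R * Rr.
  move=> i; rewrite -ltr_pdivrMr //.
  apply: (lt_le_trans (truncnS_gt _)); rewrite ler_nat /N /M0; exact: leq_addl.
have N0 : forall i, (0 < N i)%N by move=> i; rewrite /N /M0 addnS.
have hsb : forall i, 2 * (s (N i))%:R <= (N i)%:R * (1 - Rr) + 6 := fun i => sb (N i).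
have slt : forall i, (2 * s (N i) < N i)%N.
  move=> i; rewrite -(ltr_nat R) natrM.
  have := hsb i; have := NR i; move: ((N i)%:R) ((s (N i))%:R) => a b h1 h2.
  rewrite (_ : (2%N%:R : R) = 2) //; nra.
have ex : forall i, exists p : {vspace vec (N i)} * nat,
    stabilizer_code (k i) p.2 p.1 /\ (e (N i) < p.2)%N.
  move=> i; have [C [d [h1 h2]]] := code_param (slt i).
  by exists (C, d).
pose P := fun i => proj1_sig (constructive_indefinite_description _ (ex i)).
have PP : forall i, stabilizer_code (k i) (P i).2 (P i).1 /\ (e (N i) < (P i).2)%N.
  move=> i; exact: (proj2_sig (constructive_indefinite_description _ (ex i))).
exists N, k, (fun i => (P i).2), (fun i => (P i).1).
split; first by move=> i; case: (PP i).
split; first by move=> M'; exists M' => i hi; rewrite /N; apply: (leq_trans hi); exact: leq_addr.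
split.
  move=> eps eps0; exists (Num.truncn (6 / eps)).+1 => i hi.
  have nE : 6 < (N i)%:R * eps.
    rewrite -ltr_pdivrMr //; apply: (lt_le_trans (truncnS_gt _)).
    rewrite ler_nat /N; apply: (leq_trans hi); exact: leq_addr.
  have n0 : 0 < ((N i)%:R : R) by rewrite ltr0n.
  rewrite ler_pdivlMr // /k natrB; last exact: ltnW.
  rewrite natrM (_ : (2%N%:R : R) = 2) //.
  have := hsb i; move: nE n0 Rpos; move: ((N i)%:R) ((s (N i))%:R) => a b h1 h2 h3 h4.
  nra.
move=> eps eps0; exists 0%N => i _.
have n0 : 0 < ((N i)%:R : R) by rewrite ltr0n.
rewrite ler_pdivlMr //.
have [_ hd] := PP i.
have h1 : delta * (N i)%:R < (e (N i)).+1%:R by exact: truncnS_gt.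
have h2 : ((e (N i)).+1%:R : R) <= ((P i).2)%:R by rewrite ler_nat.
nra.
Qed.
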